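(* Let $I$ be an ideal of $C(X)_\mathcal{P}$. Then $I$ is a $z_\mathcal{P}$-ideal if and only if $I$ is a $z$-ideal of the ring $C(X)_\mathcal{P}$.
   Context: Let $(X,\tau)$ be a $T_1$ topological space and $\mathcal{P}$ an ideal of closed subsets of $X$ (a nonempty family of closed sets closed under finite unions and under taking closed subsets). For $f\colon X\to\mathbb{R}$, $D_f$ denotes the set of points of $X$ at which $f$ is discontinuous, and $C(X)_\mathcal{P}=\{f\colon X\to\mathbb{R} : \overline{D_f}\in\mathcal{P}\}$, a commutative ring with unity under pointwise operations. For $f\in C(X)_\mathcal{P}$, $Z_\mathcal{P}(f)=\{x\in X: f(x)=0\}$. An ideal $I$ of $C(X)_\mathcal{P}$ is a $z_\mathcal{P}$-ideal if whenever $f\in I$, $g\in C(X)_\mathcal{P}$ and $Z_\mathcal{P}(f)\subseteq Z_\mathcal{P}(g)$, then $g\in I$. For a commutative ring $R$ with unity and $a\in R$, $M(a)$ is the intersection of all maximal ideals of $R$ containing $a$; an ideal $I$ of $R$ is a $z$-ideal if $a\in I$ implies $M(a)\subseteq I$. *)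

(* Defs.v *)
From HB Require Import structures.
From mathcomp Require Import all_boot all_order all_algebra.
From mathcomp Require Import all_classical all_reals all_analysis.
Set Implicit Arguments. Unset Strict Implicit. Unset Printing Implicit Defensive.
Import Order.TTheory GRing.Theory Num.Theory.
Import numFieldNormedType.Exports.
Local Open Scope classical_set_scope.
Local Open Scope ring_scope.

Section Defs.
Variables (X : topologicalType) (R : realType).

Definition closed_ideal (P : set (set X)) : Prop :=
  [/\ P !=set0,
      (forall A, P A -> closed A),
      (forall A B, P A -> P B -> P (A `|` B)) &
      (forall A B, P A -> closed B -> B `<=` A -> P B)].

Definition Dset (f : X -> R) : set X := [set x | ~ {for x, continuous f}].

(* Carrier of the ring C(X)_P. *)
Definition CP (P : set (set X)) : set (X -> R) :=
  [set f | P (closure (Dset f))].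

Definition ZP (f : X -> R) : set X := [set x | f x = 0].

Definition is_ideal (P : set (set X)) (I : set (X -> R)) : Prop :=
  [/\ I `<=` CP P,
      I (fun _ => 0),
      (forall f g, I f -> I g -> I (f \- g)) &
      (forall f h, I f -> CP P h -> I (h \* f))].

Definition is_maximal_ideal (P : set (set X)) (M : set (X -> R)) : Prop :=
  [/\ is_ideal P M, ~ M (fun _ => 1) &
      forall J, is_ideal P J -> ~ J (fun _ => 1) -> M `<=` J -> J = M].

Definition Mset (P : set (set X)) (a : X -> R) : set (X -> R) :=
  [set g | CP P g /\ forall M, is_maximal_ideal P M -> M a -> M g].

Definition is_z_ideal (P : set (set X)) (I : set (X -> R)) : Prop :=
  is_ideal P I /\ forall a, I a -> Mset P a `<=` I.

Definition is_zP_ideal (P : set (set X)) (I : set (X -> R)) : Prop :=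
  is_ideal P I /\
  forall f g, I f -> CP P g -> ZP f `<=` ZP g -> I g.

End Defs.

(* Main.v *)
Require Import Defs.
From mathcomp Require Import all_boot all_order all_algebra.
From mathcomp Require Import all_classical all_reals all_analysis.
From mathcomp Require Import lra.
Import Order.TTheory GRing.Theory Num.Theory.
Import numFieldNormedType.Exports.
Local Open Scope classical_set_scope.
Local Open Scope ring_scope.
Set Implicit Arguments. Unset Strict Implicit.

Section Helpers.
Variables (X : topologicalType) (R : realType) (P : set (set X)).
Hypothesis hP : closed_ideal P.

Lemma CP_le A (h : X -> R) : P A -> Dset h `<=` A -> CP P h.
Proof.
move=> PA sub; case: hP => _ cl _ down.
apply: (down A) => //; first exact: closed_closure.
rewrite [X in _ `<=` X](proj1 (closure_id A) (cl A PA)).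
exact: closureS.
Qed.

Lemma CP2 (f g h : X -> R) : CP P f -> CP P g ->
  Dset h `<=` Dset f `|` Dset g -> CP P h.
Proof.
move=> cf cg sub; apply: (@CP_le (closure (Dset f) `|` closure (Dset g))).
  by case: hP => _ _ U _; apply: U.
by move=> x /sub [] ?; [left|right]; exact: subset_closure.
Qed.

Lemma CP_cst (c : R) : CP P (fun _ => c).
Proof.
case: hP => [[A PA] _ _ _]; apply: (@CP_le A) => // x; rewrite /Dset /= => nc.
exfalso; apply: nc; exact: cvg_cst.
Qed.

Lemma DsetB (f g : X -> R) : Dset (f \- g) `<=` Dset f `|` Dset g.
Proof.
move=> x nc; apply: contrapT => /not_orP [cf cg]; apply: nc.
exact: (cvgB (contrapT cf) (contrapT cg)).
Qed.

Lemma DsetD (f g : X -> R) : Dset (fun x => f x + g x) `<=` Dset f `|` Dset g.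
Proof.
move=> x nc; apply: contrapT => /not_orP [cf cg]; apply: nc.
exact: (cvgD (contrapT cf) (contrapT cg)).
Qed.

Lemma DsetM (f g : X -> R) : Dset (f \* g) `<=` Dset f `|` Dset g.
Proof.
move=> x nc; apply: contrapT => /not_orP [cf cg]; apply: nc.
exact: (cvgM (contrapT cf) (contrapT cg)).
Qed.

Lemma DsetV (u : X -> R) : (forall x, u x != 0) ->
  Dset (fun x => (u x)^-1) `<=` Dset u `|` Dset u.
Proof.
move=> nz x nc; left; move=> cu; apply: nc.
exact: (cvgV (nz x) cu).
Qed.

End Helpers.

Theorem theorem2p3 (X : topologicalType) (R : realType)
  (P : set (set X)) (I : set (X -> R)) :
  accessible_space X -> closed_ideal P -> is_ideal P I ->
  (is_zP_ideal P I <-> is_z_ideal P I).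
Proof.
move=> _ hP hI; split.
- case=> _ zP; split=> // a Ia g [CPg Mg].
  apply: (zP a g Ia CPg) => x ax.
  pose Mx := [set f : X -> R | CP P f /\ f x = 0].
  have maxM : is_maximal_ideal P Mx.
    split.
    - split.
      + by move=> f [].
      + by split; [exact: CP_cst|].
      + move=> f h [cf fx] [ch hx]; split; first exact: (CP2 hP cf ch (@DsetB _ _ _ _)).
        by rewrite /= fx hx subr0.
      + move=> f h [cf fx] ch; split; first exact: (CP2 hP ch cf (@DsetM _ _ _ _)).
        by rewrite /= fx mulr0.
    - by case=> _ /= /eqP; rewrite oner_eq0.
    - move=> J [Jsub J0 JB JM] J1 MJ; apply/seteqP; split; last exact: MJ.
      move=> h Jh; have ch := Jsub _ Jh; split=> //.
      apply: contrapT => hx0; apply: J1.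
      have Mh : Mx (h \- (fun _ => h x)).
        split; first exact: (CP2 hP ch (CP_cst hP (h x)) (@DsetB _ _ _ _)).
        by rewrite /= subrr.
      have Jc : J (fun _ => h x).
        have := JB _ _ Jh (MJ _ Mh).
        by have -> : h \- (h \- (fun _ => h x)) = (fun _ => h x)
          by apply/funext => y /=; rewrite opprB addrC subrK.
      have e : (fun _ : X => (h x)^-1) \* (fun _ : X => h x) = (fun _ : X => 1 : R).
        by apply/funext => y /=; rewrite mulVf //; apply/eqP.
      by rewrite -e; apply: JM _ _ Jc (CP_cst hP (h x)^-1).
  have Mxa : Mx a by split=> //; case: hI => sub _ _ _; exact: sub.
  by case: (Mg Mx maxM Mxa).
- case=> _ zI; split=> // f g If cg sub.
  apply: (zI f If); split=> // M [[Msub M0 MB MM] M1 Mmax] Mf.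
  apply: contrapT => Mg.
  pose J := [set k : X -> R | exists m h, [/\ M m, CP P h & k = (fun x => m x + h x * g x)]].
  have CPJ m h : M m -> CP P h -> CP P (fun x => m x + h x * g x).
    move=> Mm ch; apply: (CP2 hP (Msub _ Mm) _ (@DsetD _ _ _ _)).
    exact: (CP2 hP ch cg (@DsetM _ _ _ _)).
  have idJ : is_ideal P J.
    split.
    - by move=> k [m [h [Mm ch ->]]]; apply: CPJ.
    - exists (fun _ => 0), (fun _ => 0); split => //; first exact: CP_cst.
      by apply/funext => y; rewrite mul0r addr0.
    - move=> k1 k2 [m1 [h1 [Mm1 ch1 ->]]] [m2 [h2 [Mm2 ch2 ->]]].
      exists (m1 \- m2), (h1 \- h2); split; first exact: MB.
        exact: (CP2 hP ch1 ch2 (@DsetB _ _ _ _)).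
      by apply/funext => y /=; rewrite mulrBl opprD !addrA; congr (_ + _); rewrite addrAC.
    - move=> k c [m [h [Mm ch ->]]] cc.
      exists (c \* m), (c \* h); split; first exact: MM.
        exact: (CP2 hP cc ch (@DsetM _ _ _ _)).
      by apply/funext => y /=; rewrite mulrDr mulrA.
  have MJ : M `<=` J.
    move=> m Mm; exists m, (fun _ => 0); split => //; first exact: CP_cst.
    by apply/funext => y; rewrite mul0r addr0.
  have [J1|nJ1] := pselect (J (fun _ => 1)); last first.
    have eJ := Mmax J idJ nJ1 MJ; apply: Mg; rewrite -eJ.
    exists (fun _ => 0), (fun _ => 1); split => //; first exact: CP_cst.
    by apply/funext => y; rewrite mul1r add0r.
  case: J1 => m [h [Mm ch e1]].
  pose u := fun x => m x * m x + f x * f x.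
  have Mu : M u.
    have Mmm := MM _ _ Mm (Msub _ Mm).
    have Mff := MM _ _ Mf (Msub _ Mf).
    have := MB _ _ Mmm (MB _ _ M0 Mff).
    by have -> : (m \* m) \- ((fun _ => 0) \- (f \* f)) = u
      by apply/funext => y /=; rewrite sub0r opprK.
  have nz x : u x != 0.
    apply/negP => /eqP ux.
    have e := congr1 (fun k => k x) e1; rewrite /= in e.
    have mx : m x = 0 by rewrite /u in ux; nra.
    have fx : f x = 0 by rewrite /u in ux; nra.
    have gx : g x = 0 := sub x fx.
    by move: e; rewrite mx gx mulr0 addr0 => /eqP; rewrite oner_eq0.
  have cu := Msub _ Mu.
  have e : (fun x => (u x)^-1) \* u = (fun _ : X => 1 : R).
    by apply/funext => y /=; rewrite mulVf.
  by apply: M1; rewrite -e; apply: MM _ _ Mu (CP2 hP cu cu (DsetV nz)).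
Qed.
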